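(* Let $q$ be a prime power and let $A$ and $B$ be parity check matrices over $\mathbb{F}_q$ of the Hamming codes $[n_a,k_a,3]_q$ and $[n_b,k_b,3]_q$ respectively, where $n_a=(q^{m_a}-1)/(q-1)\ge3$, $n_b=(q^{m_b}-1)/(q-1)\ge3$, $k_a=n_a-m_a$, $k_b=n_b-m_b$. Let $C$ be the linear code over $\mathbb{F}_q$ with parity check matrix $H=A\otimes B$. Then: (1) $C$ has length $n=n_an_b$, dimension $k=n-m_am_b$ and minimum distance $d=3$; (2) the covering radius of $C$ is $\rho=\min\{m_a,m_b\}$; (3) $C$ is completely transitive, and therefore completely regular.
   Context: $A\otimes B$ denotes the Kronecker product (each entry $a_{r,s}$ of $A$ replaced by the block $a_{r,s}B$). The $q$-ary Hamming code with $m$ check symbols has a parity check matrix of size $m\times(q^m-1)/(q-1)$ whose columns are one nonzero representative of each one-dimensional subspace of $\mathbb{F}_q^m$. The covering radius of $C$ is $\max_{{\bf v}\in\mathbb{F}_q^n}\min_{{\bf c}\in C}\mathrm{wt}({\bf v}-{\bf c})$. The automorphism group $\mathrm{Aut}(C)$ consists of all $n\times n$ monomial matrices $M$ over $\mathbb{F}_q$ (exactly one nonzero entry in each row and column) with ${\bf c}M\in C$ for all ${\bf c}\in C$, together with (when $q$ is not prime) the field automorphisms of $\mathbb{F}_q$ preserving $C$ and their compositions; it acts on cosets by $\phi({\bf v}+C)=\phi({\bf v})+C$. A linear code with covering radius $\rho$ is completely transitive if $\mathrm{Aut}(C)$ has exactly $\rho+1$ orbits on the set of cosets of $C$. A code $C$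 is completely regular if for each $l\ge0$ every vector in $C(l)=\{{\bf x}:d({\bf x},C)=l\}$ has the same number $c_l$ of neighbors (vectors at Hamming distance 1) in $C(l-1)$ and the same number $b_l$ of neighbors in $C(l+1)$. *)

(* Defs.v *)
From HB Require Import structures.
From mathcomp Require Import all_boot all_order all_algebra all_field.
Set Implicit Arguments. Unset Strict Implicit. Unset Printing Implicit Defensive.
Import GRing.Theory.
Local Open Scope ring_scope.

Section Codes.
Variable F : finFieldType.

(* entry of a matrix at natural-number indices (0 outside the range) *)
Definition ent m n (A : 'M[F]_(m, n)) (r s : nat) : F :=
  match @insub _ (fun k => k < m)%N 'I_m r, @insub _ (fun k => k < n)%N 'I_n s with
  | Some i, Some j => A i j
  | _, _ => 0
  end.

(* Kronecker product: entry ((r*m2 + i), (s*n2 + j)) is a_{r,s} b_{i,j} *)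
Definition kron m1 n1 m2 n2 (A : 'M[F]_(m1, n1)) (B : 'M[F]_(m2, n2))
  : 'M[F]_(m1 * m2, n1 * n2) :=
  \matrix_(i, j) (ent A (i %/ m2) (j %/ n2) * ent B (i %% m2) (j %% n2)).

(* A is a parity check matrix of a q-ary Hamming code with m check symbols:
   its columns are nonzero, no two distinct columns span the same line, and
   every one-dimensional subspace of F^m is spanned by some column. *)
Definition hamming_pcm m n (A : 'M[F]_(m, n)) : Prop :=
  [/\ forall j : 'I_n, col j A != 0,
      forall (j1 j2 : 'I_n) (a : F), col j1 A = a *: col j2 A -> j1 = j2 &
      forall v : 'cV[F]_m, v != 0 -> exists (j : 'I_n) (a : F), v = a *: col j A].

Definition code r n (H : 'M[F]_(r, n)) : {set 'rV[F]_n} :=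
  [set c : 'rV[F]_n | c *m H^T == 0].

Definition wt n (v : 'rV[F]_n) : nat := #|[set j : 'I_n | v 0 j != 0]|.
Definition hdist n (u v : 'rV[F]_n) : nat := wt (u - v).

Definition min_distance n (C : {set 'rV[F]_n}) : nat :=
  \big[minn/n]_(c in C | c != 0) wt c.

(* distance from a vector to the code (n is an upper bound) *)
Definition dist_to n (C : {set 'rV[F]_n}) (v : 'rV[F]_n) : nat :=
  \big[minn/n]_(c in C) hdist v c.

Definition covering_radius n (C : {set 'rV[F]_n}) : nat :=
  \max_(v : 'rV[F]_n) dist_to C v.

Definition monomial n (M : 'M[F]_n) : bool :=
  [forall i, #|[set j | M i j != 0]| == 1%N] &&
  [forall j, #|[set i | M i j != 0]| == 1%N].

Definition field_aut (s : {ffun F -> F}) : bool :=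
  [forall x, forall y, (s (x + y) == s x + s y) && (s (x * y) == s x * s y)]
  && (s 1 == 1) && injectiveb s.

Definition preserves n (f : 'rV[F]_n -> 'rV[F]_n) (C : {set 'rV[F]_n}) : bool :=
  [forall c in C, f c \in C].

(* generators of Aut(C) acting on cosets: coset v + C is sent to coset w + C *)
Definition aut_step n (C : {set 'rV[F]_n}) : rel 'rV[F]_n := fun v w =>
  [exists M : 'M[F]_n,
      [&& monomial M, preserves (fun c => c *m M) C & v *m M - w \in C]]
  || [exists s : {ffun F -> F},
      [&& field_aut s, preserves (map_mx s) C & map_mx s v - w \in C]].

(* orbits of Aut(C) on the cosets, each orbit represented by the union of
   its cosets (the group generated is finite, so the reflexive-transitive
   closure of the generator steps is the orbit relation) *)
Definition aut_coset_orbits n (C : {set 'rV[F]_n}) : {set {set 'rV[F]_n}} :=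
  [set [set w | connect (aut_step C) v w] | v : 'rV[F]_n].

Definition completely_transitive n (C : {set 'rV[F]_n}) : Prop :=
  #|aut_coset_orbits C| = (covering_radius C).+1.

Definition completely_regular n (C : {set 'rV[F]_n}) : Prop :=
  (forall (l : nat) (x y : 'rV[F]_n), dist_to C x = l.+1 -> dist_to C y = l.+1 ->
     #|[set z | (hdist x z == 1%N) && (dist_to C z == l)]|
     = #|[set z | (hdist y z == 1%N) && (dist_to C z == l)]|) /\
  (forall (l : nat) (x y : 'rV[F]_n), dist_to C x = l -> dist_to C y = l ->
     #|[set z | (hdist x z == 1%N) && (dist_to C z == l.+1)]|
     = #|[set z | (hdist y z == 1%N) && (dist_to C z == l.+1)]|).

End Codes.

(* Main.v *)
Require Import Defs.
From HB Require Import structures.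
From mathcomp Require Import all_boot all_order all_algebra all_field.
Import GRing.Theory.
Local Open Scope ring_scope.

Set Implicit Arguments. Unset Strict Implicit. Unset Printing Implicit Defensive.

Section Idx.
Variables n1 n2 : nat.

Lemma pidx_proof (i : 'I_n1) (j : 'I_n2) : (i * n2 + j < n1 * n2)%N.
Proof.
apply: (@leq_trans (i * n2 + n2)); first by rewrite ltn_add2l.
by rewrite -mulSnr leq_mul2r ltn_ord orbT.
Qed.
Definition pidx (i : 'I_n1) (j : 'I_n2) : 'I_(n1 * n2) := Ordinal (pidx_proof i j).

Lemma n2pos (k : 'I_(n1 * n2)) : (0 < n2)%N.
Proof. case: n2 k => [|//] k; by case: k => /= x; rewrite muln0. Qed.

Lemma qf_proof (k : 'I_(n1 * n2)) : (k %/ n2 < n1)%N.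
Proof. by rewrite ltn_divLR ?n2pos. Qed.
Lemma qs_proof (k : 'I_(n1 * n2)) : (k %% n2 < n2)%N.
Proof. by rewrite ltn_pmod ?n2pos. Qed.
Definition qf (k : 'I_(n1 * n2)) : 'I_n1 := Ordinal (qf_proof k).
Definition qs (k : 'I_(n1 * n2)) : 'I_n2 := Ordinal (qs_proof k).

Lemma qf_pidx i j : qf (pidx i j) = i.
Proof.
apply: val_inj => /=; have hp : (0 < n2)%N by apply: leq_ltn_trans (ltn_ord j).
by rewrite divnMDl // divn_small ?addn0.
Qed.
Lemma qs_pidx i j : qs (pidx i j) = j.
Proof. by apply: val_inj => /=; rewrite modnMDl modn_small. Qed.
Lemma pidx_q k : pidx (qf k) (qs k) = k.
Proof. by apply: val_inj => /=; rewrite -divn_eq. Qed.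
Lemma pidx_inj i j i' j' : pidx i j = pidx i' j' -> i = i' /\ j = j'.
Proof. by move=> e; move: (congr1 qf e) (congr1 qs e); rewrite !qf_pidx !qs_pidx. Qed.

Lemma sum_pidx (R : nmodType) (g : 'I_(n1 * n2) -> R) :
  \sum_k g k = \sum_i \sum_j g (pidx i j).
Proof.
rewrite pair_bigA /=.
rewrite (reindex (fun p : 'I_n1 * 'I_n2 => pidx p.1 p.2)) /=.
  by apply: eq_bigr => -[i j].
exists (fun k => (qf k, qs k)) => [[i j] _ | k _] /=.
  by rewrite qf_pidx qs_pidx.
by rewrite pidx_q.
Qed.

Variable F : finFieldType.
Definition vm (v : 'rV[F]_(n1 * n2)) : 'M[F]_(n1, n2) := \matrix_(i, j) v 0 (pidx i j).
Definition mv (V : 'M[F]_(n1, n2)) : 'rV[F]_(n1 * n2) := \row_k V (qf k) (qs k).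
Lemma vmK : cancel vm mv.
Proof. by move=> v; apply/rowP => k; rewrite !mxE pidx_q; congr (v _ _); apply: val_inj. Qed.
Lemma mvK : cancel mv vm.
Proof. by move=> V; apply/matrixP => i j; rewrite !mxE qf_pidx qs_pidx. Qed.
Lemma vmB u w : vm (u - w) = vm u - vm w.
Proof. by apply/matrixP => i j; rewrite !mxE. Qed.
Lemma vmD u w : vm (u + w) = vm u + vm w.
Proof. by apply/matrixP => i j; rewrite !mxE. Qed.
Lemma vm0 : vm 0 = 0.
Proof. by apply/matrixP => i j; rewrite !mxE. Qed.
Lemma mvB U W : mv (U - W) = mv U - mv W.
Proof. by apply/rowP => k; rewrite !mxE. Qed.
Lemma mv0 : mv 0 = 0.
Proof. by apply/rowP => k; rewrite !mxE. Qed.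
Lemma vm_inj : injective vm. Proof. exact: can_inj vmK. Qed.
Lemma mv_inj : injective mv. Proof. exact: can_inj mvK. Qed.

Definition nz m n (V : 'M[F]_(m, n)) := #|[set p : 'I_m * 'I_n | V p.1 p.2 != 0]|.

Lemma wt_nz v : wt v = nz (vm v).
Proof.
rewrite /wt /nz -(card_imset _ (f := fun p : 'I_n1 * 'I_n2 => pidx p.1 p.2)); last first.
  by move=> [i j] [i' j'] /= /pidx_inj [-> ->].
apply: eq_card => k; rewrite inE; apply/idP/imsetP.
  by move=> h; exists (qf k, qs k); rewrite ?inE ?mxE /= pidx_q.
by case=> [[i j]]; rewrite inE mxE /= => h ->.
Qed.
End Idx.


Section Syn.
Variable F : finFieldType.

Lemma entE m n (M : 'M[F]_(m,n)) (i:'I_m) (j:'I_n) : ent M i j = M i j.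
Proof.
rewrite /ent; case: insubP => [i' _ ei|]; last by rewrite ltn_ord.
case: insubP => [j' _ ej|]; last by rewrite ltn_ord.
by congr (M _ _); apply: val_inj.
Qed.

Variables ma na mb nb : nat.
Variables (A : 'M[F]_(ma, na)) (B : 'M[F]_(mb, nb)).

Lemma kronE k' k : kron A B k' k = A (qf k') (qf k) * B (qs k') (qs k).
Proof. by rewrite mxE -!entE. Qed.

Definition SS (v : 'rV[F]_(na * nb)) := A *m vm v *m B^T.

Lemma synK v : v *m (kron A B)^T = mv (SS v).
Proof.
apply/rowP => k'; rewrite !mxE sum_pidx.
under eq_bigr => i _ do under eq_bigr => j _ do
  rewrite mxE kronE qf_pidx qs_pidx.
under [RHS]eq_bigr => j _ do rewrite !mxE big_distrl /=.
rewrite exchange_big /=; apply: eq_bigr => i _; apply: eq_bigr => j _.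
by rewrite !mxE mulrA (mulrC (v _ _)).
Qed.
End Syn.


Section NZ.
Variable F : finFieldType.
Variables m n : nat.
Implicit Types X Y : 'M[F]_(m, n).

Lemma nz_sumE X : nz X = (\sum_i \sum_j nat_of_bool (X i j != 0%R))%N.
Proof.
rewrite /nz -sum1_card pair_bigA /= big_mkcond /=; apply: eq_bigr => p _.
by rewrite inE; case: ifP.
Qed.

Lemma nzD X Y : (nz (X + Y) <= nz X + nz Y)%N.
Proof.
rewrite /nz; apply: leq_trans (leq_card_setU _ _).
apply: subset_leq_card; apply/subsetP => p; rewrite !inE mxE.
by apply: contraR; rewrite negb_or !negbK => /andP[/eqP -> /eqP ->]; rewrite addr0.
Qed.

Lemma nz0 : nz (0 : 'M[F]_(m, n)) = 0%N.
Proof. by rewrite /nz; apply/eqP; rewrite cards_eq0; apply/eqP/setP => p; rewrite !inE mxE eqxx. Qed.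

Lemma nz_delta a i j : (nz (a *: delta_mx i j : 'M[F]_(m, n)) <= 1)%N.
Proof.
rewrite /nz -(cards1 (i, j)); apply: subset_leq_card; apply/subsetP => -[i' j'].
rewrite !inE !mxE /=; apply: contraR => h.
have [ei|] := eqVneq i' i; last by rewrite andFb mulr0 eqxx.
have [ej|] := eqVneq j' j; last by rewrite andbF mulr0 eqxx.
by move: h; rewrite ei ej eqxx.
Qed.

Lemma nz_sum (I : finType) (P : pred I) (W : I -> 'M[F]_(m, n)) :
  (nz (\sum_(k | P k) W k) <= \sum_(k | P k) nz (W k))%N.
Proof.
apply: (big_ind2 (fun M k => nz M <= k)%N); first by rewrite nz0.
  by move=> x1 x2 y1 y2 h1 h2; apply: leq_trans (nzD _ _) (leq_add h1 h2).
by [].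
Qed.

Lemma rankD X Y : (\rank (X + Y)%R <= \rank X + \rank Y)%N.
Proof.
have h := mxrankS (addmx_sub_adds (submx_refl X) (submx_refl Y)).
apply: leq_trans h _.
by case: (mxrank_adds_leqif X Y).
Qed.

Lemma rank_sum (I : finType) (P : pred I) (W : I -> 'M[F]_(m, n)) :
  (\rank (\sum_(k | P k) W k)%R <= \sum_(k | P k) \rank (W k))%N.
Proof.
apply: (big_ind2 (fun M k => \rank M <= k)%N); first by rewrite mxrank0.
  by move=> x1 x2 y1 y2 h1 h2; apply: leq_trans (rankD _ _) (leq_add h1 h2).
by [].
Qed.

Lemma rank_le_nz X : (\rank X <= nz X)%N.
Proof.
rewrite {1}[X]matrix_sum_delta nz_sumE.
have := rank_sum (fun _ => true) (fun i => \sum_(j < n) X i j *: delta_mx i j).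
move=> h; apply: (leq_trans h); apply: leq_sum => i _.
have := rank_sum (fun _ => true) (fun j => X i j *: delta_mx i j).
move=> h2; apply: (leq_trans h2); apply: leq_sum => j _.
have [->|hx] := eqVneq (X i j) 0; first by rewrite scale0r mxrank0.
by rewrite mxrank_scale_nz // mxrank_delta.
Qed.

Lemma nz_eq0 X : nz X = 0%N -> X = 0.
Proof.
move=> h; apply/matrixP => i j; rewrite mxE; apply/eqP; apply: contraT => hn.
have : (0 < nz X)%N by apply/card_gt0P; exists (i, j); rewrite inE.
by rewrite h.
Qed.

Lemma nz_le_mn X : (nz X <= m * n)%N.
Proof. by apply: leq_trans (max_card _) _; rewrite card_prod !card_ord. Qed.
End NZ.


Section Ham.
Variable F : finFieldType.
Variables m n : nat.
Variable A : 'M[F]_(m, n).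
Hypothesis hA : hamming_pcm A.

Lemma hcol_nz j : col j A != 0. Proof. by case: hA. Qed.
Lemma hcol_inj j1 j2 a : col j1 A = a *: col j2 A -> j1 = j2.
Proof. by case: hA => _ h _; apply: h. Qed.
Lemma hspan v : v != 0 -> exists j a, v = a *: col j A.
Proof. by case: hA => _ _ h; apply: h. Qed.

Lemma hsurj_v (v : 'cV[F]_m) : exists u, A *m u = v.
Proof.
have [->|nz] := eqVneq v 0; first by exists 0; rewrite mulmx0.
have [j [a ->]] := hspan nz; exists (a *: delta_mx j 0).
by rewrite -scalemxAr -colE.
Qed.

Lemma hsurj p (S : 'M[F]_(m, p)) : exists U, A *m U = S.
Proof.
have [f hf] := fin_all_exists (fun j : 'I_p => hsurj_v (col j S)).
exists (\matrix_(k, j) f j k 0); apply/matrixP => i j; rewrite !mxE.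
have := congr1 (fun M : 'cV[F]_m => M i 0) (hf j); rewrite !mxE => <-.
by apply: eq_bigr => k _; rewrite mxE.
Qed.

Lemma sumcol (u : 'cV[F]_n) : A *m u = \sum_j u j 0 *: col j A.
Proof.
apply/colP => i; rewrite !mxE summxE; apply: eq_bigr => j _.
by rewrite !mxE mulrC.
Qed.

Lemma kern2 (u : 'cV[F]_n) j1 j2 :
  (forall j, j != j1 -> j != j2 -> u j 0 = 0) -> A *m u = 0 -> u = 0.
Proof.
move=> hu; rewrite sumcol (bigD1 j1) //=.
have single : forall j, u j 0 *: col j A = 0 -> u j 0 = 0.
  by move=> j /eqP; rewrite scaler_eq0 (negbTE (hcol_nz j)) orbF => /eqP.
have [e|ne] := eqVneq j2 j1.
  rewrite big1 ?addr0 => [h1|j hj]; last by rewrite hu ?scale0r // e.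
  apply/colP => j; rewrite mxE; have [->|nj] := eqVneq j j1; first exact: single.
  by apply: hu; rewrite // e.
rewrite (bigD1 j2) //= big1 ?addr0 => [h|j /andP[hj1 hj2]]; last by rewrite hu ?scale0r.
have h1 : u j1 0 = 0.
  apply: contraTeq isT => nz1; have : col j1 A = (- (u j2 0 / u j1 0)) *: col j2 A.
    apply: (@scalerI _ _ (u j1 0)) => //; rewrite scalerA mulrN mulrCA divff ?mulr1 //.
    by rewrite scaleNr; apply/eqP; rewrite -addr_eq0 h.
  by move/hcol_inj/eqP; rewrite eq_sym (negbTE ne).
move: h; rewrite h1 scale0r add0r => /single h2.
apply/colP => j; rewrite mxE; have [->//|nj] := eqVneq j j1.
by have [->//|nj2] := eqVneq j j2; apply: hu.
Qed.
End Ham.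


Section Dist.
Variable F : finFieldType.
Variable n : nat.
Variable C : {set 'rV[F]_n}.

Lemma wt_le (v : 'rV[F]_n) : (wt v <= n)%N.
Proof. by rewrite /wt; apply: leq_trans (max_card _) _; rewrite card_ord. Qed.

Lemma D1 v c : c \in C -> (dist_to C v <= hdist v c)%N.
Proof.
move=> hc; rewrite /dist_to; have : c \in index_enum 'rV[F]_n by rewrite mem_index_enum.
elim: (index_enum _) => [//|x s IH]; rewrite big_cons inE; case/orP => [/eqP <-|/IH h].
  by rewrite hc geq_minl.
by case: ifP => _ //; apply: leq_trans (geq_minr _ _) h.
Qed.

Lemma D2 v t : (forall c, c \in C -> t <= hdist v c)%N -> (t <= n)%N ->
  (t <= dist_to C v)%N.
Proof.
move=> h hn; rewrite /dist_to; apply: (big_ind (fun x => t <= x)%N) => //.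
by move=> x y hx hy; rewrite leq_min hx hy.
Qed.
End Dist.

Lemma mulmx_sum_colrow (F : finFieldType) m k p (X : 'M[F]_(m, k)) (Y : 'M[F]_(k, p)) :
  X *m Y = \sum_i col i X *m row i Y.
Proof.
apply/matrixP => a b; rewrite !mxE summxE; apply: eq_bigr => i _.
by rewrite !mxE big_ord1 !mxE.
Qed.

Section Code.
Variable F : finFieldType.
Variables ma na mb nb : nat.
Variables (A : 'M[F]_(ma, na)) (B : 'M[F]_(mb, nb)).
Hypotheses (hA : hamming_pcm A) (hB : hamming_pcm B).
Local Notation H := (kron A B).
Local Notation C := (code H).
Local Notation SS := (SS A B).

Lemma inC v : (v \in C) = (SS v == 0).
Proof.
rewrite inE synK; apply/eqP/eqP => [h|->]; last exact: mv0.
by apply: mv_inj; rewrite h mv0.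
Qed.

Lemma SSB u w : SS (u - w) = SS u - SS w.
Proof. by rewrite /SS vmB mulmxBr mulmxBl. Qed.

Lemma SS_mv V : SS (mv V) = A *m V *m B^T.
Proof. by rewrite /SS mvK. Qed.

Lemma SS_surj S : exists v, SS v = S.
Proof.
have [U hU] := hsurj hA S.
have [Y hY] := hsurj hB U^T.
by exists (mv Y^T); rewrite SS_mv -mulmxA -trmx_mul hY trmxK hU.
Qed.

Lemma R1 (x : 'cV[F]_ma) (y : 'rV[F]_mb) :
  exists W, A *m W *m B^T = x *m y /\ (nz W <= 1)%N.
Proof.
have [->|xn] := eqVneq x 0.
  by exists 0; rewrite mul0mx mulmx0 mul0mx nz0.
have [->|yn] := eqVneq y 0.
  by exists 0; rewrite mulmx0 mulmx0 mul0mx nz0.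
have [r [a ->]] := hspan hA xn.
have ytn : y^T != 0 by apply: contraNneq yn => h; rewrite -[y]trmxK h trmx0.
have [j [b hy]] := hspan hB ytn.
exists ((a * b) *: delta_mx r j); split; last exact: nz_delta.
have -> : y = b *: row j B^T by rewrite -[y]trmxK hy linearZ /= tr_col.
rewrite -(mul_delta_mx (0 : 'I_1)) -scalemxAr -scalemxAl mulmxA -colE.
by rewrite -scalemxAl -mulmxA -rowE -scalemxAr scalerA.
Qed.

Lemma dist_rank v : dist_to C v = \rank (SS v).
Proof.
apply/eqP; rewrite eqn_leq; apply/andP; split; last first.
  apply: D2 => [c hc|].
    rewrite /hdist wt_nz; move: hc; rewrite inC => /eqP hc.
    have -> : SS v = SS (v - c) by rewrite SSB hc subr0.
    apply: leq_trans (rank_le_nz _); rewrite /SS.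
    by apply: leq_trans (mxrankM_maxl _ _) _; apply: mxrankM_maxr.
  apply: leq_trans (nz_le_mn (vm v)); apply: leq_trans (rank_le_nz _).
  by rewrite /SS; apply: leq_trans (mxrankM_maxl _ _) _; apply: mxrankM_maxr.
set S := SS v.
have [Wf hW] := fin_all_exists (fun i => R1 (col i (col_base S)) (row i (row_base S))).
pose W := \sum_i Wf i.
have hAW : A *m W *m B^T = S.
  rewrite /W mulmx_sumr mulmx_suml; apply: (etrans _ (mulmx_base S)).
  rewrite (mulmx_sum_colrow (col_base S)).
  by apply: eq_bigr => i _; case: (hW i).
have hnz : (nz W <= \rank S)%N.
  apply: leq_trans (nz_sum _ _) _.
  rewrite -[X in (_ <= X)%N]card_ord -sum1_card; apply: leq_sum => i _.
  by case: (hW i).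
have hc : v - mv W \in C by rewrite inC SSB SS_mv hAW subrr.
apply: leq_trans (D1 _ hc) _.
by rewrite /hdist opprB addrC subrK wt_nz mvK.
Qed.
End Code.


Lemma subset2 (T : finType) (X : {set T}) (x0 : T) :
  (#|X| <= 2)%N -> exists a b, X \subset [set a; b].
Proof.
move=> h; have : [|| #|X| == 0%N, #|X| == 1%N | #|X| == 2%N].
  by move: h; case: #|X| => [|[|[|]]].
case/or3P => [/eqP/cards0_eq -> | /cards1P [x ->] | /cards2P [x [y [_ ->]]]].
- by exists x0, x0; apply: sub0set.
- by exists x, x; apply/subsetP => z; rewrite !inE => ->.
- by exists x, y.
Qed.

Lemma bigmin_le (T : finType) (P : pred T) (f : T -> nat) d x :
  P x -> (\big[minn/d]_(i | P i) f i <= f x)%N.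
Proof.
move=> hx; have : x \in index_enum T by rewrite mem_index_enum.
elim: (index_enum _) => [//|y s IH]; rewrite big_cons inE; case/orP => [/eqP <-|/IH h].
  by rewrite hx geq_minl.
by case: ifP => _ //; apply: leq_trans (geq_minr _ _) h.
Qed.

Lemma col_mulmx (F : finFieldType) m n p (X : 'M[F]_(m, n)) (Y : 'M[F]_(n, p)) i :
  col i (X *m Y) = X *m col i Y.
Proof. by rewrite !colE mulmxA. Qed.

Section Main1.
Variable F : finFieldType.
Variables ma na mb nb : nat.
Variables (A : 'M[F]_(ma, na)) (B : 'M[F]_(mb, nb)).
Hypotheses (hA : hamming_pcm A) (hB : hamming_pcm B).
Local Notation H := (kron A B).
Local Notation C := (code H).
Local Notation SS := (SS A B).

Lemma rankH : \rank H^T = (ma * mb)%N.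
Proof.
have : row_full H^T.
  apply/row_fullP.
  have hv : forall i : 'I_(ma * mb), exists v : 'rV[F]_(na * nb), v *m H^T = 'e_i.
    move=> i; have [v hv] := SS_surj hA hB (vm 'e_i).
    by exists v; rewrite synK hv vmK.
  have [f hf] := fin_all_exists hv.
  exists (\matrix_(i, k) f i 0 k); apply/row_matrixP => i.
  rewrite row_mul row1 -hf; congr (_ *m _); apply/rowP => k; rewrite !mxE.
  by congr (f i _ _); apply: val_inj; case: (0 : 'I_1) => -[].
by move/eqP.
Qed.

Lemma part1 : \rank (kermx H^T) = (na * nb - ma * mb)%N.
Proof. by rewrite mxrank_ker rankH. Qed.

Lemma weight3 (V : 'M[F]_(na, nb)) : A *m V *m B^T = 0 -> (nz V <= 2)%N -> V = 0.
Proof.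
move=> h0 h2; case: (posnP (nz V)) => [/nz_eq0 //|].
move/card_gt0P => [x0 _].
have [p1 [p2 hs]] := subset2 x0 h2.
have hsub r j : V r j != 0 -> (r, j) \in [set p1; p2].
  by move=> hn; apply: (subsetP hs); rewrite inE.
have hcol : forall i, col i (V *m B^T) = 0.
  move=> i; apply: (kern2 hA (j1 := p1.1) (j2 := p2.1)).
    move=> r n1 n2; rewrite !mxE; apply: big1 => j _; rewrite mxE.
    have [->|hn] := eqVneq (V r j) 0; first by rewrite mul0r.
    move: (hsub r j hn); rewrite !inE => /orP[/eqP e|/eqP e].
      by move: n1; rewrite -e eqxx.
    by move: n2; rewrite -e eqxx.
  by rewrite -col_mulmx mulmxA h0; apply/colP => k; rewrite !mxE.
have hW : V *m B^T = 0.
  apply/matrixP => r i; have := congr1 (fun M : 'cV[F]_na => M r 0) (hcol i).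
  by rewrite !mxE.
have hBV : B *m V^T = 0 by rewrite -(trmxK B) -trmx_mul hW trmx0.
have hcolV : forall r, col r V^T = 0.
  move=> r; apply: (kern2 hB (j1 := p1.2) (j2 := p2.2)).
    move=> j n1 n2; rewrite !mxE.
    have [->//|hn] := eqVneq (V r j) 0.
    move: (hsub r j hn); rewrite !inE => /orP[/eqP e|/eqP e].
      by move: n1; rewrite -e eqxx.
    by move: n2; rewrite -e eqxx.
  by rewrite -col_mulmx hBV; apply/colP => k; rewrite !mxE.
apply/matrixP => r j; have := congr1 (fun M : 'cV[F]_nb => M j 0) (hcolV r).
by rewrite !mxE.
Qed.

Lemma part3 : covering_radius C = minn ma mb.
Proof.
rewrite /covering_radius; apply/eqP; rewrite eqn_leq; apply/andP; split.
  by apply/bigmax_leqP => v _; rewrite (dist_rank hA hB) leq_min rank_leq_row rank_leq_col.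
have [v hv] := SS_surj hA hB (pid_mx (minn ma mb)); apply: leq_trans (leq_bigmax v).
by rewrite (dist_rank hA hB) hv rank_pid_mx // ?geq_minl ?geq_minr.
Qed.

Hypotheses (hna : (3 <= na)%N) (hnb : (3 <= nb)%N).

Lemma part2 : min_distance C = 3%N.
Proof.
apply/eqP; rewrite eqn_leq; apply/andP; split; last first.
  rewrite /min_distance; apply: (big_ind (fun x => 3 <= x)%N).
  - by rewrite (leq_trans hna) // leq_pmulr // (leq_trans _ hnb).
  - by move=> x y hx hy; rewrite leq_min hx hy.
  move=> c /andP[hc cn]; rewrite leqNgt; apply/negP => h3.
  have h0 : A *m vm c *m B^T = 0 by move: hc; rewrite (inC A B) => /eqP.
  have := weight3 h0; rewrite -wt_nz => /(_ h3) e.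
  by move: cn; rewrite -(vmK c) e mv0 eqxx.
have h0 : (0 < na)%N by apply: leq_trans hna.
have h1 : (1 < na)%N by apply: leq_trans hna.
have hj : (0 < nb)%N by apply: leq_trans hnb.
pose i0 : 'I_na := Ordinal h0; pose i1 : 'I_na := Ordinal h1; pose j0 : 'I_nb := Ordinal hj.
have ne01 : i1 != i0 by [].
have hs : col i0 A + col i1 A != 0.
  apply/negP => /eqP e; have : col i1 A = (-1) *: col i0 A.
    by rewrite scaleN1r; apply/eqP; rewrite -addr_eq0 addrC e.
  by move/(hcol_inj hA)/eqP; rewrite (negbTE ne01).
have [k [al hk]] := hspan hA hs.
have alnz : al != 0 by apply: contraNneq hs => e; rewrite hk e scale0r.
have nek : k != i0.
  apply/negP => /eqP e; move: hk; rewrite e => hk.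
  have : col i1 A = (al - 1) *: col i0 A.
    by rewrite scalerBl scale1r -hk addrC addKr.
  by move/(hcol_inj hA)/eqP; rewrite (negbTE ne01).
pose V : 'M[F]_(na, nb) := delta_mx i0 j0 + delta_mx i1 j0 - al *: delta_mx k j0.
have hV : A *m V *m B^T = 0.
  have -> : V = (delta_mx i0 0 + delta_mx i1 0 - al *: delta_mx k 0 : 'cV[F]_na) *m delta_mx 0 j0.
    by rewrite mulmxBl mulmxDl -scalemxAl !mul_delta_mx.
  rewrite mulmxA mulmxBr mulmxDr -scalemxAr -!colE -hk subrr.
  by rewrite !mul0mx.
have hc : mv V \in C by rewrite (inC A B) SS_mv hV.
have Vn : mv V != 0.
  apply/negP => /eqP e; have : V i0 j0 = 0 by rewrite -(mvK V) e vm0 mxE.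
  rewrite !mxE !eqxx eq_sym (negbTE ne01) (eq_sym i0) (negbTE nek) /= mulr0 subr0 addr0.
  by move/eqP; rewrite oner_eq0.
rewrite /min_distance; apply: (leq_trans (@bigmin_le _ _ _ _ (mv V) _)).
  by rewrite hc Vn.
rewrite wt_nz mvK /V; apply: leq_trans (nzD _ _) _.
rewrite -scaleNr; apply: leq_trans (leq_add (nzD _ _) (nz_delta _ _ _)) _.
have hd : forall i j, (nz (delta_mx i j : 'M[F]_(na, nb)) <= 1)%N.
  by move=> i j; rewrite -[delta_mx i j]scale1r; apply: nz_delta.
by rewrite -[3%N]/(1 + 1 + 1)%N !leq_add ?hd.
Qed.
End Main1.


Section Mono.
Variable F : finFieldType.
Variable n : nat.

Lemma wt0 (v : 'rV[F]_n) : wt v = 0%N -> v = 0.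
Proof.
move=> h; apply/rowP => j; rewrite mxE; apply/eqP; apply: contraT => hn.
have : (0 < wt v)%N by apply/card_gt0P; exists j; rewrite inE.
by rewrite h.
Qed.

Lemma wt_zero : wt (0 : 'rV[F]_n) = 0%N.
Proof. by apply/eqP; rewrite cards_eq0; apply/eqP/setP => j; rewrite !inE mxE eqxx. Qed.

Lemma mono_col (M : 'M[F]_n) : monomial M ->
  forall j, exists i, forall i', (M i' j != 0) = (i' == i).
Proof.
case/andP => _ /forallP hc j; have /cards1P [i hi] := hc j.
by exists i => i'; have := congr1 (fun X : {set 'I_n} => i' \in X) hi; rewrite !inE.
Qed.

Lemma mono_row (M : 'M[F]_n) : monomial M ->
  forall i, exists j, forall j', (M i j' != 0) = (j' == j).
Proof.
case/andP => /forallP hc _ i; have /cards1P [j hj] := hc i.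
by exists j => j'; have := congr1 (fun X : {set 'I_n} => j' \in X) hj; rewrite !inE.
Qed.

Lemma mono_wt (M : 'M[F]_n) : monomial M -> forall v, wt (v *m M) = wt v.
Proof.
move=> hM v.
have [p hp] := fin_all_exists (mono_col hM).
have pinj : injective p.
  move=> j1 j2 e; have [j hj] := mono_row hM (p j1).
  have h1 : M (p j1) j1 != 0 by rewrite hp.
  have h2 : M (p j1) j2 != 0 by rewrite hp e.
  by move: h1 h2; rewrite !hj => /eqP -> /eqP ->.
have hv : forall j, (v *m M) 0 j = v 0 (p j) * M (p j) j.
  move=> j; rewrite mxE (bigD1 (p j)) //= big1 ?addr0 // => i hi.
  by have := hp j i; rewrite (negbTE hi) => /negbFE/eqP ->; rewrite mulr0.
rewrite /wt -[RHS](card_preimset _ pinj); apply: eq_card => j; rewrite !inE hv mulf_eq0.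
by have := hp j (p j); rewrite eqxx negb_or => ->; rewrite andbT.
Qed.

Lemma monoM_inj (M : 'M[F]_n) : monomial M -> injective (fun v : 'rV[F]_n => v *m M).
Proof.
move=> hM x y /= e; apply/eqP; rewrite -subr_eq0; apply/eqP/wt0.
by rewrite -(mono_wt hM) mulmxBl e subrr wt_zero.
Qed.

Lemma field_aut_props (s : {ffun F -> F}) : field_aut s ->
  [/\ s 0 = 0, forall x y, s (x - y) = s x - s y & injective s].
Proof.
case/andP => /andP [/forallP h _] /injectiveP hi.
have hadd : forall x y, s (x + y) = s x + s y.
  by move=> x y; have /forallP/(_ y)/andP[/eqP -> _] := h x.
have s0 : s 0 = 0.
  have e := hadd 0 0; rewrite addr0 in e.
  by apply: (addrI (s 0)); rewrite -e addr0.
have sN : forall x, s (- x) = - s x.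
  move=> x; apply/eqP; rewrite -subr_eq0 opprK -hadd.
  by rewrite addNr s0.
by split=> // x y; rewrite hadd sN.
Qed.

Lemma map_wt (s : {ffun F -> F}) : field_aut s -> forall v : 'rV[F]_n, wt (map_mx s v) = wt v.
Proof.
move=> /field_aut_props [s0 _ si] v; rewrite /wt; apply: eq_card => j; rewrite !inE mxE.
by rewrite -{1}s0 (inj_eq si).
Qed.

Lemma map_sub (s : {ffun F -> F}) : field_aut s -> forall x y : 'rV[F]_n,
  map_mx s (x - y) = map_mx s x - map_mx s y.
Proof. by move=> /field_aut_props [_ sB _] x y; apply/rowP => j; rewrite !mxE sB. Qed.

Variable C : {set 'rV[F]_n}.

Lemma dist_le_n v : (dist_to C v <= n)%N.
Proof.
rewrite /dist_to; apply: (big_ind (fun x => x <= n)%N) => //.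
  by move=> x y hx _; apply: leq_trans (geq_minl _ _) hx.
by move=> c _; apply: wt_le.
Qed.

Lemma G (f : 'rV[F]_n -> 'rV[F]_n) :
  (forall x y, f (x - y) = f x - f y) -> (forall x, wt (f x) = wt x) ->
  (forall c, c \in C -> f c \in C) -> forall v, dist_to C (f v) = dist_to C v.
Proof.
move=> fB fw fC v.
have finj : injective f.
  move=> x y e; apply/eqP; rewrite -subr_eq0; apply/eqP/wt0.
  by rewrite -fw fB e subrr wt_zero.
have fCC : f @: C = C.
  apply/eqP; rewrite eqEcard card_imset // leqnn andbT.
  by apply/subsetP => c /imsetP [c' hc' ->]; apply: fC.
apply/eqP; rewrite eqn_leq; apply/andP; split.
  apply: D2 (dist_le_n _) => c hc.
  rewrite /hdist -fw fB; apply: D1; exact: fC.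
apply: D2 (dist_le_n _) => c hc.
have : c \in f @: C by rewrite fCC.
case/imsetP => c' hc' ->.
by rewrite /hdist -fB fw; apply: D1.
Qed.
End Mono.


Lemma eq_by_cols (F : finFieldType) m n (X Y : 'M[F]_(m, n)) :
  (forall j, col j X = col j Y) -> X = Y.
Proof.
move=> h; apply/matrixP => i j.
by have := congr1 (fun M : 'cV[F]_m => M i 0) (h j); rewrite !mxE.
Qed.

Section GL.
Variable F : finFieldType.
Variables m n : nat.
Variable A : 'M[F]_(m, n).
Hypothesis hA : hamming_pcm A.

Lemma glmono (P : 'M[F]_m) : P \in unitmx -> exists D : 'M[F]_n, monomial D /\ A *m D = P *m A.
Proof.
move=> hP.
have Pnz : forall r, P *m col r A != 0.
  move=> r; apply: contraNneq (hcol_nz hA r) => e.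
  by rewrite -(mulKmx hP (col r A)) e mulmx0.
have hx : forall r : 'I_n, exists ka : 'I_n * F, P *m col r A = ka.2 *: col ka.1 A.
  by move=> r; have [k [a e]] := hspan hA (Pnz r); exists (k, a).
have [f hf] := fin_all_exists hx.
pose pi r := (f r).1; pose al r := (f r).2.
have alnz : forall r, al r != 0.
  by move=> r; apply: contraNneq (Pnz r) => e; rewrite hf -/(al r) e scale0r.
have pinj : injective pi.
  move=> r1 r2 e; have h : col r1 A = (al r1 / al r2) *: col r2 A.
    apply: (can_inj (mulKmx hP)); rewrite -scalemxAr !hf -/(al r1) -/(al r2) -/(pi r1) -/(pi r2) e.
    by rewrite scalerA divfK ?alnz.
  have := @hcol_inj F m n A hA r1 r2 (al r1 / al r2) h. by [].
pose D : 'M[F]_n := \matrix_(k, r) (if k == pi r then al r else 0).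
exists D; split.
  apply/andP; split; apply/forallP => k.
    rewrite -(cards1 k) -[#|[set k]|](card_preimset _ pinj); apply/eqP/eq_card => r.
    rewrite !inE mxE [pi r == k]eq_sym.
    by case: (k == pi r); rewrite ?alnz ?eqxx.
  apply/cards1P; exists (pi k); apply/setP => i; rewrite !inE mxE.
  by case: (i == pi k); rewrite ?alnz ?eqxx.
apply: eq_by_cols => r; rewrite col_mulmx sumcol // (bigD1 (pi r)) //= big1 ?addr0.
  by rewrite col_mulmx hf !mxE eqxx.
by move=> k hk; rewrite !mxE (negbTE hk) scale0r.
Qed.
End GL.

Lemma pidx_eq n1 n2 (l : 'I_(n1 * n2)) r j : (l == pidx r j) = (qf l == r) && (qs l == j).
Proof.
apply/eqP/andP => [->|[/eqP <- /eqP <-]]; first by rewrite qf_pidx qs_pidx.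
by rewrite pidx_q.
Qed.

Section Kmono.
Variable F : finFieldType.
Variables na nb : nat.
Variables (D1 : 'M[F]_na) (D2 : 'M[F]_nb).

Definition kmono : 'M[F]_(na * nb) :=
  \matrix_(k, l) (D1 (qf l) (qf k) * D2 (qs l) (qs k)).

Lemma kmono_vm v : vm (v *m kmono) = D1 *m vm v *m D2^T.
Proof.
apply/matrixP => r j; rewrite !mxE sum_pidx.
under eq_bigr => i _ do under eq_bigr => j' _ do rewrite mxE qf_pidx qs_pidx.
under [RHS]eq_bigr => j' _ do rewrite !mxE big_distrl /=.
rewrite exchange_big /=; apply: eq_bigr => i _; apply: eq_bigr => j' _.
by rewrite !mxE qf_pidx qs_pidx mulrCA mulrA.
Qed.

Lemma kmono_mono : monomial D1 -> monomial D2 -> monomial kmono.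
Proof.
move=> h1 h2; apply/andP; split; apply/forallP => k; apply/cards1P.
  have [r1 hr1] := mono_col h1 (qf k); have [j1 hj1] := mono_col h2 (qs k).
  exists (pidx r1 j1); apply/setP => l; rewrite !inE mxE mulf_eq0 negb_or hr1 hj1.
  by rewrite pidx_eq.
have [r1 hr1] := mono_row h1 (qf k); have [j1 hj1] := mono_row h2 (qs k).
exists (pidx r1 j1); apply/setP => l; rewrite !inE mxE mulf_eq0 negb_or hr1 hj1.
by rewrite pidx_eq.
Qed.
End Kmono.


Lemma rank_equiv (F : finFieldType) ma mb (S S' : 'M[F]_(ma, mb)) : \rank S = \rank S' ->
  exists P Q, [/\ P \in unitmx, Q \in unitmx & P *m S *m Q^T = S'].
Proof.
move=> e.
exists (col_ebase S' *m invmx (col_ebase S)), (invmx (row_ebase S) *m row_ebase S')^T.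
split.
- by rewrite unitmx_mul unitmx_inv !col_ebase_unit.
- by rewrite unitmx_tr unitmx_mul unitmx_inv !row_ebase_unit.
rewrite trmxK; have eS := mulmx_ebase S.
apply: (etrans _ (mulmx_ebase S')); rewrite -e.
rewrite -[X in _ *m X *m _ = _]eS !mulmxA mulmxKV ?col_ebase_unit //.
by rewrite mulmxK ?row_ebase_unit.
Qed.

Section Main2.
Variable F : finFieldType.
Variables ma na mb nb : nat.
Variables (A : 'M[F]_(ma, na)) (B : 'M[F]_(mb, nb)).
Hypotheses (hA : hamming_pcm A) (hB : hamming_pcm B).
Local Notation H := (kron A B).
Local Notation C := (code H).
Local Notation SS := (SS A B).

Lemma SS_kmono P Q D1 D2 z : A *m D1 = P *m A -> B *m D2 = Q *m B ->
  SS (z *m kmono D1 D2) = P *m SS z *m Q^T.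
Proof.
move=> e1 e2; rewrite /SS kmono_vm !mulmxA e1 -!mulmxA; congr (_ *m (_ *m _)).
by rewrite -trmx_mul e2 trmx_mul.
Qed.

Lemma step_of_rank v w : \rank (SS v) = \rank (SS w) ->
  exists M, [/\ monomial M, forall c, c \in C -> c *m M \in C & SS (v *m M) = SS w].
Proof.
case/rank_equiv => P [Q [hP hQ e]].
have [D1 [m1 e1]] := glmono hA hP; have [D2 [m2 e2]] := glmono hB hQ.
exists (kmono D1 D2); split; first exact: kmono_mono.
  by move=> c; rewrite !(inC A B) (SS_kmono _ e1 e2) => /eqP ->; rewrite mulmx0 mul0mx.
by rewrite (SS_kmono _ e1 e2).
Qed.

Lemma aut_from v w : \rank (SS v) = \rank (SS w) -> aut_step C v w.
Proof.
case/step_of_rank => M [hM hC hS]; apply/orP; left; apply/existsP; exists M.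
rewrite hM /=; apply/andP; split.
  by apply/forall_inP => c hc; apply: hC.
by rewrite (inC A B) SSB hS subrr.
Qed.

Lemma SS_eq_rank u w : u - w \in C -> \rank (SS w) = \rank (SS u).
Proof. by rewrite (inC A B) SSB subr_eq0 => /eqP ->. Qed.

Lemma step_rank v w : aut_step C v w -> \rank (SS w) = \rank (SS v).
Proof.
case/orP => [/existsP [M /and3P [hM /forall_inP hp hin]] | /existsP [s /and3P [hs /forall_inP hp hin]]].
  rewrite (SS_eq_rank hin) -!(dist_rank hA hB); apply: (G (f := fun x => x *m M)) => //.
    by move=> x y; rewrite mulmxBl.
  exact: mono_wt.
rewrite (SS_eq_rank hin) -!(dist_rank hA hB); apply: (G (f := map_mx s)) => //.
  exact: map_sub.
exact: map_wt.
Qed.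

Lemma orbitE v : [set w | connect (aut_step C) v w] = [set w | \rank (SS w) == \rank (SS v)].
Proof.
apply/setP => w; rewrite !inE; apply/idP/idP.
  move=> hc.
  have cl : closed (aut_step C) [pred u | \rank (SS u) == \rank (SS v)].
    by move=> x y /step_rank e; rewrite !inE e.
  by have := closed_connect cl hc; rewrite !inE eqxx => /esym.
by move/eqP => e; apply: connect1; apply: aut_from; rewrite e.
Qed.

Lemma card_orbits : #|aut_coset_orbits C| = (minn ma mb).+1.
Proof.
pose Rk (t : nat) := [set w | \rank (SS w) == t].
have wit : forall t, (t <= minn ma mb)%N -> exists v, \rank (SS v) = t.
  move=> t ht; have [v hv] := SS_surj hA hB (pid_mx t); exists v; rewrite hv rank_pid_mx //.
    by apply: leq_trans ht (geq_minl _ _).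
  by apply: leq_trans ht (geq_minr _ _).
have -> : aut_coset_orbits C = [set Rk (val t) | t : 'I_(minn ma mb).+1].
  apply/setP => X; apply/imsetP/imsetP.
    case=> v _ ->; exists (inord (\rank (SS v))) => //; rewrite orbitE /Rk /= inordK //.
    by rewrite ltnS leq_min rank_leq_row rank_leq_col.
  case=> t _ ->; have [v hv] := wit t (ltn_ord t); exists v => //.
  by rewrite orbitE hv.
rewrite card_imset ?card_ord // => t1 t2 e; apply: val_inj.
have [v hv] := wit t1 (ltn_ord t1).
have : v \in Rk t1 by rewrite inE hv.
by rewrite e inE hv => /eqP.
Qed.

Lemma creg_le x y k : dist_to C x = dist_to C y ->
  (#|[set z | (hdist x z == 1%N) && (dist_to C z == k)]|
   <= #|[set z | (hdist y z == 1%N) && (dist_to C z == k)]|)%N.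
Proof.
rewrite !(dist_rank hA hB) => /step_of_rank [M [hM hC hS]].
pose phi z := z *m M - (x *m M - y).
have phinj : injective phi.
  by move=> z1 z2; rewrite /phi => /addIr /(monoM_inj hM).
rewrite -(card_imset _ phinj); apply: subset_leq_card; apply/subsetP => z' /imsetP [z].
rewrite !inE => /andP [h1 h2] ->.
have -> : hdist y (phi z) = hdist x z.
  rewrite /hdist /phi -(mono_wt hM (x - z)) mulmxBl; congr wt.
  by rewrite opprB addrA [y + _]addrC addrNK.
rewrite (eqP h1) eqxx /= -(eqP h2) !(dist_rank hA hB) (SS_eq_rank (u := z *m M)).
  by rewrite -!(dist_rank hA hB); apply/eqP; apply: (G (f := fun x => x *m M)) => //; [move=> a b; rewrite mulmxBl | exact: mono_wt].
by rewrite /phi opprB addrC addrNK (inC A B) SSB hS subrr.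
Qed.
End Main2.


Unset Implicit Arguments. Set Strict Implicit.

Theorem theorem1 (F : finFieldType) (ma na mb nb : nat)
    (A : 'M[F]_(ma, na)) (B : 'M[F]_(mb, nb)) :
  hamming_pcm A -> hamming_pcm B ->
  na = ((#|F| ^ ma).-1 %/ (#|F|).-1)%N ->
  nb = ((#|F| ^ mb).-1 %/ (#|F|).-1)%N ->
  (3 <= na)%N -> (3 <= nb)%N ->
  let H := kron A B in
  let C := code H in
  [/\ \rank (kermx H^T) = (na * nb - ma * mb)%N,
      min_distance C = 3%N,
      covering_radius C = minn ma mb,
      completely_transitive C &
      completely_regular C].
Proof.
move=> hA hB _ _ hna hnb H C.
split.
- exact: part1 hA hB.
- exact: part2 hA hB hna hnb.
- exact: part3 hA hB.
- by rewrite /completely_transitive (part3 hA hB) (card_orbits hA hB).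
- split => l x y hx hy; apply/eqP; rewrite eqn_leq !(creg_le hA hB) //; by rewrite hx hy.
Qed.
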